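(* Let $G$ be an oriented graph on $[n]$ with $|\mathcal{P}(G)|\ge 1$. Then \[\max_{\sigma,\rho\in\mathcal{P}(G)} d_\ell(\sigma,\rho)\le \max_{1\le i\le n}\{\,n-|R(i)|-|R^{-1}(i)|-1\,\}.\]
   Context: Write a permutation $\sigma\in S_n$ as $\sigma=\sigma_1\cdots\sigma_n$. A permutation $\sigma$ satisfies an oriented graph $G=([n],E)$ if $\sigma_u>\sigma_v$ for every oriented edge $u\to v\in E$; $\mathcal{P}(G)$ is the set of permutations satisfying $G$. Write $u\rightsquigarrow v$ if there is an oriented path from $u$ to $v$ in $G$. For a vertex $v$, $R(v)=\{u\in[n]\setminus\{v\}: v\rightsquigarrow u\}$ and $R^{-1}(v)=\{u\in[n]\setminus\{v\}: u\rightsquigarrow v\}$. The $\ell_\infty$-metric is $d_\ell(\sigma,\rho)=\max_{1\le i\le n}|\sigma_i-\rho_i|$. *)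

(* Defs.v *)
From mathcomp Require Import all_boot all_order all_algebra all_fingroup.
Set Implicit Arguments. Unset Strict Implicit. Unset Printing Implicit Defensive.

(* Vertices [n] are represented by 'I_n (vertex i+1 <-> ordinal i);
   a permutation sigma in S_n by s : {perm 'I_n}, sigma_i <-> s i (values shifted
   by one, which does not affect differences or comparisons). *)

Definition oriented_graph n (E : rel 'I_n) : Prop :=
  (forall u, ~~ E u u) /\ (forall u v, E u v -> ~~ E v u).

Definition satisfies n (E : rel 'I_n) (s : {perm 'I_n}) : Prop :=
  forall u v, E u v -> (s v < s u)%N.

Definition reach n (E : rel 'I_n) (v : 'I_n) : {set 'I_n} :=
  [set u | (u != v) && connect E v u].
Definition reach_inv n (E : rel 'I_n) (v : 'I_n) : {set 'I_n} :=
  [set u | (u != v) && connect E u v].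

(* l_infinity distance: max_i |s_i - r_i| (written max - min on nat). *)
Definition dl n (s r : {perm 'I_n}) : nat :=
  \max_(i < n) (maxn (s i) (r i) - minn (s i) (r i))%N.

(* Main.v *)
Require Import Defs.
From mathcomp Require Import all_boot all_order all_algebra all_fingroup.
From mathcomp Require Import zify.
Set Implicit Arguments. Unset Strict Implicit.

Lemma path_lt n (E : rel 'I_n) (s : {perm 'I_n}) :
  satisfies E s -> forall p v, path E v p -> last v p = v \/ (s (last v p) < s v)%N.
Proof.
move=> hs; elim=> [|x p IH] v /=; first by left.
case/andP=> hE hp; right; have := hs _ _ hE.
by case: (IH x hp) => [->|h] // hx; apply: ltn_trans h hx.
Qed.

Lemma conn_lt n (E : rel 'I_n) (s : {perm 'I_n}) u v :
  satisfies E s -> connect E v u -> u != v -> (s u < s v)%N.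
Proof.
move=> hs /connectP [p hp ->] hne.
by case: (path_lt hs hp) => // h; rewrite h eqxx in hne.
Qed.

Lemma card_range n (A : {set 'I_n}) a b :
  (forall k, k \in A -> a <= k < b)%N -> (#|A| <= b - a)%N.
Proof.
move=> hA; rewrite cardE -(size_map val) -(size_iota a (b - a)).
apply: uniq_leq_size; first by rewrite (map_inj_uniq val_inj) enum_uniq.
move=> x /mapP [k]; rewrite mem_enum => /hA hk ->.
rewrite mem_iota; move: hk; rewrite /=; lia.
Qed.

Lemma reach_le n (E : rel 'I_n) (s : {perm 'I_n}) i :
  satisfies E s -> (#|reach E i| <= s i)%N.
Proof.
move=> hs; rewrite -(card_imset _ (@perm_inj _ s)).
have -> : (s i : nat) = s i - 0 by rewrite subn0.
apply: card_range => k /imsetP [u]; rewrite inE => /andP [hne hc] ->.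
by rewrite leq0n (conn_lt hs hc hne).
Qed.

Lemma reach_inv_le n (E : rel 'I_n) (s : {perm 'I_n}) i :
  satisfies E s -> (#|reach_inv E i| <= n - (s i).+1)%N.
Proof.
move=> hs; rewrite -(card_imset _ (@perm_inj _ s)).
apply: card_range => k /imsetP [u]; rewrite inE => /andP [hne hc] ->.
have h1 : i != u by rewrite eq_sym.
by rewrite (conn_lt hs hc h1) ltn_ord.
Qed.

Lemma arith (n a b x y : nat) : a < n -> b < n -> x <= a -> x <= b -> y <= n - a.+1 -> y <= n - b.+1 ->
  maxn a b - minn a b <= n - x - y - 1.
Proof. lia. Qed.

Theorem mainTheorem3 (n : nat) (E : rel 'I_n) :
  oriented_graph E ->
  (exists s : {perm 'I_n}, satisfies E s) ->
  forall s r : {perm 'I_n}, satisfies E s -> satisfies E r ->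
  (dl s r <= \max_(i < n) (n - #|reach E i| - #|reach_inv E i| - 1))%N.
Proof.
move=> _ _ s r hs hr; apply/bigmax_leqP => i _.
apply: leq_trans (leq_bigmax i) => /=.
apply: arith (ltn_ord _) (ltn_ord _) (reach_le i hs) (reach_le i hr) (reach_inv_le i hs) (reach_inv_le i hr).
Qed.
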